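(* For any nonempty rooted trees $a$ and $b$, $\Lambda(a\bowtie b)=\Lambda(a)\diamond\Lambda(b)$.
   Context: Let $k$ be a field of characteristic $0$. $\mathcal H_{CK}$ is the free commutative $k$-algebra on isomorphism classes of nonempty (non-planar, finite) rooted trees, i.e. rooted forests with unit the empty forest $\mathbf 1$; $B_+(t_1\cdots t_n)$ is the tree obtained by joining the roots of $t_1,\dots,t_n$ to a new root ($B_+(\mathbf 1)=\bullet$). $\mathcal A=k[x]$ carries the quasi-shuffle product $\diamond$, the commutative associative product determined by $\mathbf 1\diamond u=u\diamond\mathbf 1=u$ and, for $k,l\ge1$, $x^k\diamond x^l=(x^{k-1}\diamond x^l)x+(x^k\diamond x^{l-1})x+(x^{k-1}\diamond x^{l-1})x$. $\Lambda:\mathcal H_{CK}\to(\mathcal A,\diamond)$ is the unique unital algebra morphism with $\Lambda(B_+(t_1\cdots t_n))=(\Lambda(t_1)\diamond\cdots\diamond\Lambda(t_n))\,x$ for all trees (so $\Lambda(\bullet)=x$). For trees $a=B_+(a_1\cdots a_n)$ and $b=B_+(b_1\cdots b_p)$: the Butcher product is $a\circ b=B_+(a_1\cdots a_nb)$, the merging product is $a\times b=B_+(a_1\cdots a_nb_1\cdots b_p)$, and $a\bowtie b=a\circ b+b\circ a+a\times b$. *)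

(* Defs.v *)
From HB Require Import structures.
From mathcomp Require Import all_boot all_order all_algebra.
Set Implicit Arguments. Unset Strict Implicit. Unset Printing Implicit Defensive.
Import GRing.Theory.
Local Open Scope ring_scope.

(* We use planar representatives:
   a tree is a root with a finite list of subtrees.  All notions below
   (Lambda, Butcher/merging products) are compatible with permuting
   subtrees, i.e. with tree isomorphism. *)
Inductive tree : Type := Node of seq tree.

Definition children (t : tree) : seq tree := let: Node ts := t in ts.

Definition Bplus (f : seq tree) : tree := Node f.

Definition butcher (a b : tree) : tree := Node (rcons (children a) b).
Definition merging (a b : tree) : tree := Node (children a ++ children b).

Section QSh.
Variable R : fieldType.

Fixpoint qsh_mono (m n : nat) {struct m} : {poly R} :=
  match m with
  | 0 => 'X^n
  | m'.+1 =>
      let fix aux (n : nat) : {poly R} :=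
        match n with
        | 0 => 'X^(m'.+1)
        | n'.+1 => (qsh_mono m' n + aux n' + qsh_mono m' n') * 'X
        end in aux n
  end.

Definition qsh (p q : {poly R}) : {poly R} :=
  \sum_(i < size p) \sum_(j < size q) (p`_i * q`_j) *: qsh_mono i j.

Fixpoint Lambda (t : tree) : {poly R} :=
  match t with
  | Node ts => foldr qsh 1 (map Lambda ts) * 'X
  end.

(* Lambda extended linearly to a <*> b = a o b + b o a + a x b *)
Definition Lambda_bowtie (a b : tree) : {poly R} :=
  Lambda (butcher a b) + Lambda (butcher b a) + Lambda (merging a b).

End QSh.

(* Main.v *)
Require Import Defs.
From HB Require Import structures.
From mathcomp Require Import all_boot all_order all_algebra.
Local Open Scope ring_scope.
Import GRing.Theory.

Section Proof.
Variable k : fieldType.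

Definition T (p : {poly k}) (N : nat) : k := \sum_(i < N.+1) p`_i * ('C(N, i))%:R.

Lemma sum_ext (p : {poly k}) N n1 n2 : (n1 <= n2)%N -> ((size p <= n1) || (N < n1))%N ->
  \sum_(i < n1) p`_i * ('C(N, i))%:R = \sum_(i < n2) p`_i * ('C(N, i))%:R.
Proof.
move=> le h; rewrite -(subnKC le) big_split_ord /=.
rewrite [X in _ = _ + X]big1 ?addr0 // => i _.
case/orP: h => h.
  by rewrite nth_default ?mul0r // (leq_trans h) // leq_addr.
by rewrite bin_small ?mulr0 // (leq_trans h) // leq_addr.
Qed.

Lemma T_ext (p : {poly k}) N n : ((size p <= n) || (N < n))%N -> T p N = \sum_(i < n) p`_i * ('C(N, i))%:R.
Proof.
move=> h; rewrite /T; case: (leqP N.+1 n) => hn.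
  by apply: sum_ext => //; rewrite ltnSn orbT.
symmetry; apply: sum_ext => //; first exact: ltnW.
Qed.

Lemma T_add (p q : {poly k}) N : T (p + q) N = T p N + T q N.
Proof. by rewrite /T -big_split; apply: eq_bigr => i _; rewrite coefD mulrDl. Qed.

Lemma T_scale c (p : {poly k}) N : T (c *: p) N = c * T p N.
Proof. by rewrite /T mulr_sumr; apply: eq_bigr => i _; rewrite coefZ mulrA. Qed.

Lemma T_opp (p : {poly k}) N : T (- p) N = - T p N.
Proof. by rewrite /T -sumrN; apply: eq_bigr => i _; rewrite coefN mulNr. Qed.

Lemma T_sum (I : Type) (r : seq I) (F : I -> {poly k}) N :
  T (\sum_(j <- r) F j) N = \sum_(j <- r) T (F j) N.
Proof.
elim: r => [|x r IH]; first by rewrite !big_nil /T big1 // => i _; rewrite coef0 mul0r.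
by rewrite !big_cons T_add IH.
Qed.

Lemma T_Xn n N : T 'X^n N = ('C(N, n))%:R.
Proof.
rewrite /T; case: (leqP n N) => h.
  have h' : (n < N.+1)%N by [].
  rewrite (bigD1 (Ordinal h')) //= coefXn eqxx mul1r big1 ?addr0 //.
  move=> i hi; rewrite coefXn; have [e|ne] := eqVneq (nat_of_ord i) n; last by rewrite mul0r.
  by exfalso; move/eqP: hi; apply; apply: val_inj.
rewrite bin_small // big1 // => i _; rewrite coefXn; have [e|ne] := eqVneq (nat_of_ord i) n; last by rewrite mul0r.
by exfalso; move: (ltn_ord i); rewrite e ltnS leqNgt h.
Qed.

Lemma T_1 N : T 1 N = 1.
Proof. by rewrite -(expr0 'X) T_Xn bin0. Qed.

Lemma T_X0 (p : {poly k}) : T (p * 'X) 0 = 0.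
Proof. by rewrite /T big_ord_recl big_ord0 coefMX eqxx mul0r addr0. Qed.

Lemma T_XS (p : {poly k}) N : T (p * 'X) N.+1 = T (p * 'X) N + T p N.
Proof.
rewrite /T big_ord_recl [X in _ = X + _]big_ord_recl !coefMX eqxx !mul0r !add0r.
rewrite [X in _ = _ + X]big_ord_recr /=.
rewrite [X in _ = X + _](_ : _ = \sum_(i < N) p`_i * ('C(N, i.+1))%:R); last first.
  by apply: eq_bigr => i _; rewrite /bump /= add1n coefMX.
rewrite [X in X = _](_ : _ = \sum_(i < N.+1) p`_i * ('C(N.+1, i.+1))%:R); last first.
  by apply: eq_bigr => i _; rewrite /bump /= add1n coefMX.
rewrite big_ord_recr /= binS bin_small // add0n.
rewrite (_ : \sum_(i < N) p`_i * ('C(N.+1, i.+1))%:R =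
   \sum_(i < N) p`_i * ('C(N, i.+1))%:R + \sum_(i < N) p`_i * ('C(N, i))%:R).
  by rewrite -!addrA.
by rewrite -big_split; apply: eq_bigr => i _; rewrite binS natrD mulrDr.
Qed.

Lemma T_mono m n N : T (qsh_mono k m n) N = ('C(N, m))%:R * ('C(N, n))%:R.
Proof.
elim: m n N => [|m IHm] n N; first by rewrite /= T_Xn bin0 mul1r.
elim: n N => [|n IHn] N.
  by rewrite (_ : qsh_mono k m.+1 0 = 'X^(m.+1)) // T_Xn bin0 mulr1.
rewrite (_ : qsh_mono k m.+1 n.+1 = (qsh_mono k m n.+1 + qsh_mono k m.+1 n + qsh_mono k m n) * 'X) //.
elim: N => [|N IHN]; first by rewrite T_X0 !bin0n mul0r.
rewrite T_XS IHN !T_add IHm IHn IHm !binS !natrD.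
rewrite !mulrDl !mulrDr.
set A := ('C(N, m.+1))%:R; set B := ('C(N, n.+1))%:R; set C := ('C(N, m))%:R; set D := ('C(N, n))%:R.
by rewrite -!addrA; congr (_ + _); rewrite addrCA.
Qed.

Lemma T_qsh (p q : {poly k}) N : T (qsh p q) N = T p N * T q N.
Proof.
rewrite /qsh T_sum (T_ext p N (size p)) ?leqnn // (T_ext q N (size q)) ?leqnn // mulr_suml.
apply: eq_bigr => i _; rewrite T_sum mulr_sumr; apply: eq_bigr => j _.
rewrite T_scale T_mono.
by rewrite mulrA -[p`_i * q`_j * _]mulrA [q`_j * _]mulrC !mulrA.
Qed.

Lemma T_inj (p : {poly k}) : (forall N, T p N = 0) -> p = 0.
Proof.
move=> h; apply/polyP => N; rewrite coef0.
elim: N {-2}N (leqnn N) => [|N IH] M hM.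
  move: hM; rewrite leqn0 => /eqP ->; have := h 0%N.
  by rewrite /T big_ord_recl big_ord0 bin0 mulr1 addr0.
have := h M; rewrite /T big_ord_recr /= binn mulr1 big1 ?add0r //.
move=> i _; rewrite IH ?mul0r //.
by rewrite -ltnS (leq_trans (ltn_ord i)).
Qed.

Definition F (l : seq tree) : {poly k} := foldr (@qsh k) 1 (map (Lambda k) l).

Lemma T_F l N : T (F l) N = \prod_(t <- l) T (Lambda k t) N.
Proof.
elim: l => [|t l IH]; first by rewrite big_nil /F /= T_1.
by rewrite big_cons /F /= T_qsh -IH.
Qed.

Lemma Lambda_node t : Lambda k t = F (children t) * 'X.
Proof. by case: t. Qed.

Lemma ac6 (R : zmodType) (x1 x2 x3 u v w : R) :
  x1 + u + (x2 + v) + (x3 + w) = x1 + x2 + x3 + u + (v + w).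
Proof.
rewrite -!addrA; congr (_ + _); rewrite (addrCA u); congr (_ + _).
by rewrite (addrCA u) (addrCA u) (addrCA v) (addrCA u).
Qed.

Lemma T_Frcons l t N : T (F (rcons l t)) N = T (F l) N * T (Lambda k t) N.
Proof. by rewrite -cats1 T_F big_cat big_seq1 /= -T_F. Qed.

Lemma T_Fcat l1 l2 N : T (F (l1 ++ l2)) N = T (F l1) N * T (F l2) N.
Proof. by rewrite !T_F big_cat. Qed.

End Proof.

Theorem mainTheorem13 (k : fieldType) (hk : [pchar k] =i pred0) (a b : tree) :
  Lambda_bowtie k a b = qsh (Lambda k a) (Lambda k b).
Proof.
apply/eqP; rewrite -subr_eq0; apply/eqP; apply: T_inj => N.
rewrite /Lambda_bowtie T_add T_opp !T_add T_qsh.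
rewrite /butcher /merging !(Lambda_node _ (Node _)) /=.
rewrite (Lambda_node _ a) (Lambda_node _ b).
apply/eqP; rewrite subr_eq0; apply/eqP.
elim: N => [|N IH]; first by rewrite !T_X0 !mul0r !addr0.
rewrite !T_XS !T_Frcons T_Fcat (Lambda_node _ a) (Lambda_node _ b).
rewrite !mulrDr !mulrDl -IH [T k (F k (children b)) N * _]mulrC.
exact: ac6.
Qed.
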